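(* A finite de Morgan algebra $\mathbf{M}$ is a perfect extension of its Boolean skeleton $B(\mathbf{M})$ if and only if $\mathbf{M}$ is isomorphic to a direct product of finitely many copies of $\{0,1\}$, $\{0,a,1\}$ and $\mathbf{M}_1$.
   Context: A de Morgan algebra is an algebra $(L;\vee,\wedge,{}^\circ,0,1)$ where $(L;\vee,\wedge,0,1)$ is a bounded distributive lattice and ${}^\circ$ is a unary operation satisfying $x^{\circ\circ}=x$, $(x\wedge y)^\circ=x^\circ\vee y^\circ$, $1^\circ=0$. Its Boolean skeleton is the subalgebra $B(\mathbf{M})=\{x\in M\mid x\vee x^\circ=1\}$. An algebra $\mathbf{A}$ is a perfect extension of its subalgebra $\mathbf{B}$ if every congruence of $\mathbf{B}$ has exactly one extension to a congruence of $\mathbf{A}$. $\mathbf{M}_1$ is the four-element de Morgan algebra on $\{0,a,b,1\}$ with lattice order $0<a,b<1$ ($a,b$ incomparable) and $0^\circ=1$, $1^\circ=0$, $a^\circ=a$, $b^\circ=b$; $\{0,1\}$ and $\{0,a,1\}$ denote its subalgebras on those sets. *)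

(* Defs.v *)
From Stdlib Require Import List Arith.

Record dmOps := DmOps {
  car : Type;
  djoin : car -> car -> car;
  dmeet : car -> car -> car;
  dneg : car -> car;
  dbot : car;
  dtop : car }.

Arguments djoin {d} _ _.
Arguments dmeet {d} _ _.
Arguments dneg {d} _.
Arguments dbot {d}.
Arguments dtop {d}.

Definition is_deMorgan (M : dmOps) : Prop :=
  (forall x y z : car M, djoin x (djoin y z) = djoin (djoin x y) z) /\
  (forall x y z : car M, dmeet x (dmeet y z) = dmeet (dmeet x y) z) /\
  (forall x y : car M, djoin x y = djoin y x) /\
  (forall x y : car M, dmeet x y = dmeet y x) /\
  (forall x y : car M, djoin x (dmeet x y) = x) /\
  (forall x y : car M, dmeet x (djoin x y) = x) /\
  (forall x y z : car M, dmeet x (djoin y z) = djoin (dmeet x y) (dmeet x z)) /\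
  (forall x : car M, djoin x dbot = x) /\
  (forall x : car M, dmeet x dtop = x) /\
  (forall x : car M, dneg (dneg x) = x) /\
  (forall x y : car M, dneg (dmeet x y) = djoin (dneg x) (dneg y)) /\
  dneg (@dtop M) = dbot.

Definition finite_alg (M : dmOps) : Prop :=
  exists l : list (car M), forall x, In x l.

Definition skeleton (M : dmOps) (x : car M) : Prop := djoin x (dneg x) = dtop.

Definition congruence (M : dmOps) (R : car M -> car M -> Prop) : Prop :=
  (forall x, R x x) /\
  (forall x y, R x y -> R y x) /\
  (forall x y z, R x y -> R y z -> R x z) /\
  (forall x x' y y', R x x' -> R y y' -> R (djoin x y) (djoin x' y')) /\
  (forall x x' y y', R x x' -> R y y' -> R (dmeet x y) (dmeet x' y')) /\
  (forall x x', R x x' -> R (dneg x) (dneg x')).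

(** Congruences of the subalgebra with universe S (S closed under the
    operations): relations on S (represented as relations on M supported
    in S x S) which are equivalences on S compatible with the operations. *)
Definition congruence_on (M : dmOps) (S : car M -> Prop)
    (R : car M -> car M -> Prop) : Prop :=
  (forall x y, R x y -> S x /\ S y) /\
  (forall x, S x -> R x x) /\
  (forall x y, R x y -> R y x) /\
  (forall x y z, R x y -> R y z -> R x z) /\
  (forall x x' y y', R x x' -> R y y' -> R (djoin x y) (djoin x' y')) /\
  (forall x x' y y', R x x' -> R y y' -> R (dmeet x y) (dmeet x' y')) /\
  (forall x x', R x x' -> R (dneg x) (dneg x')).

Definition extends (M : dmOps) (S : car M -> Prop)
    (phi theta : car M -> car M -> Prop) : Prop :=
  congruence M theta /\ forall x y, S x -> S y -> (theta x y <-> phi x y).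

Definition perfect_extension (M : dmOps) (S : car M -> Prop) : Prop :=
  forall phi, congruence_on M S phi ->
    exists theta, extends M S phi theta /\
      forall theta', extends M S phi theta' -> forall x y, theta' x y <-> theta x y.

Definition isomorphic (A B : dmOps) : Prop :=
  exists (f : car A -> car B) (g : car B -> car A),
    (forall x, g (f x) = x) /\ (forall y, f (g y) = y) /\
    (forall x y, f (djoin x y) = djoin (f x) (f y)) /\
    (forall x y, f (dmeet x y) = dmeet (f x) (f y)) /\
    (forall x, f (dneg x) = dneg (f x)) /\
    f dbot = dbot /\ f dtop = dtop.

Definition prod_alg (A B : dmOps) : dmOps :=
  {| car := (car A * car B)%type;
     djoin := fun x y => (djoin (fst x) (fst y), djoin (snd x) (snd y));
     dmeet := fun x y => (dmeet (fst x) (fst y), dmeet (snd x) (snd y));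
     dneg := fun x => (dneg (fst x), dneg (snd x));
     dbot := (dbot, dbot);
     dtop := (dtop, dtop) |}.

Definition fin (n : nat) : Type := { i : nat | i < n }.

Definition pow_alg (A : dmOps) (n : nat) : dmOps :=
  {| car := fin n -> car A;
     djoin := fun f g i => djoin (f i) (g i);
     dmeet := fun f g i => dmeet (f i) (g i);
     dneg := fun f i => dneg (f i);
     dbot := fun _ => dbot;
     dtop := fun _ => dtop |}.

(** M1 = {0,a,b,1}, 0 < a,b < 1, a,b incomparable, a° = a, b° = b. *)
Inductive m1 : Type := m1_0 | m1_a | m1_b | m1_1.

Definition m1_join (x y : m1) : m1 :=
  match x, y with
  | m1_0, z | z, m1_0 => z
  | m1_1, _ | _, m1_1 => m1_1
  | m1_a, m1_a => m1_a
  | m1_b, m1_b => m1_b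
  | _, _ => m1_1
  end.

Definition m1_meet (x y : m1) : m1 :=
  match x, y with
  | m1_1, z | z, m1_1 => z
  | m1_0, _ | _, m1_0 => m1_0
  | m1_a, m1_a => m1_a
  | m1_b, m1_b => m1_b
  | _, _ => m1_0
  end.

Definition m1_neg (x : m1) : m1 :=
  match x with m1_0 => m1_1 | m1_1 => m1_0 | z => z end.

Definition M1 : dmOps :=
  {| car := m1; djoin := m1_join; dmeet := m1_meet; dneg := m1_neg;
     dbot := m1_0; dtop := m1_1 |}.

Definition sub01 (x : m1) : Prop := x = m1_0 \/ x = m1_1.
Definition sub0a1 (x : m1) : Prop := x = m1_0 \/ x = m1_a \/ x = m1_1.

Lemma sub_join (P : m1 -> Prop) (HP : forall x y, P x -> P y -> P (m1_join x y))
  (x y : { z | P z }) : P (m1_join (proj1_sig x) (proj1_sig y)).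
Proof. apply HP; [exact (proj2_sig x) | exact (proj2_sig y)]. Qed.
Lemma sub_meet (P : m1 -> Prop) (HP : forall x y, P x -> P y -> P (m1_meet x y))
  (x y : { z | P z }) : P (m1_meet (proj1_sig x) (proj1_sig y)).
Proof. apply HP; [exact (proj2_sig x) | exact (proj2_sig y)]. Qed.
Lemma sub_neg (P : m1 -> Prop) (HP : forall x, P x -> P (m1_neg x))
  (x : { z | P z }) : P (m1_neg (proj1_sig x)).
Proof. apply HP; exact (proj2_sig x). Qed.

Lemma sub01_join x y : sub01 x -> sub01 y -> sub01 (m1_join x y).
Proof. unfold sub01; intros [->| ->] [->| ->]; simpl; auto. Qed.
Lemma sub01_meet x y : sub01 x -> sub01 y -> sub01 (m1_meet x y).
Proof. unfold sub01; intros [->| ->] [->| ->]; simpl; auto. Qed.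
Lemma sub01_neg x : sub01 x -> sub01 (m1_neg x).
Proof. unfold sub01; intros [->| ->]; simpl; auto. Qed.
Lemma sub0a1_join x y : sub0a1 x -> sub0a1 y -> sub0a1 (m1_join x y).
Proof. unfold sub0a1; intros [->|[->| ->]] [->|[->| ->]]; simpl; auto. Qed.
Lemma sub0a1_meet x y : sub0a1 x -> sub0a1 y -> sub0a1 (m1_meet x y).
Proof. unfold sub0a1; intros [->|[->| ->]] [->|[->| ->]]; simpl; auto. Qed.
Lemma sub0a1_neg x : sub0a1 x -> sub0a1 (m1_neg x).
Proof. unfold sub0a1; intros [->|[->| ->]]; simpl; auto. Qed.

Definition sub_M1 (P : m1 -> Prop)
  (Hj : forall x y, P x -> P y -> P (m1_join x y))
  (Hm : forall x y, P x -> P y -> P (m1_meet x y))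
  (Hn : forall x, P x -> P (m1_neg x))
  (H0 : P m1_0) (H1 : P m1_1) : dmOps :=
  {| car := { x : m1 | P x };
     djoin := fun x y => exist P _ (sub_join P Hj x y);
     dmeet := fun x y => exist P _ (sub_meet P Hm x y);
     dneg := fun x => exist P _ (sub_neg P Hn x);
     dbot := exist P m1_0 H0;
     dtop := exist P m1_1 H1 |}.

Definition M1_01 : dmOps :=
  sub_M1 sub01 sub01_join sub01_meet sub01_neg
    (or_introl eq_refl) (or_intror eq_refl).
Definition M1_0a1 : dmOps :=
  sub_M1 sub0a1 sub0a1_join sub0a1_meet sub0a1_neg
    (or_introl eq_refl) (or_intror (or_intror eq_refl)).

(* Submission.v *)
Require Import Defs.
From Stdlib Require Import List Arith Lia Classical ClassicalEpsilon
  FunctionalExtensionality ProofIrrelevance.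

Local Notation "x ⊔ y" := (djoin x y) (at level 50, left associativity).
Local Notation "x ⊓ y" := (dmeet x y) (at level 40, left associativity).

Section Lat.
Variable M : dmOps.
Hypothesis HM : is_deMorgan M.

Lemma jA (x y z : car M) : x ⊔ (y ⊔ z) = x ⊔ y ⊔ z. Proof. apply HM. Qed.
Lemma mA (x y z : car M) : x ⊓ (y ⊓ z) = x ⊓ y ⊓ z. Proof. apply HM. Qed.
Lemma jC (x y : car M) : x ⊔ y = y ⊔ x. Proof. apply HM. Qed.
Lemma mC (x y : car M) : x ⊓ y = y ⊓ x. Proof. apply HM. Qed.
Lemma jabs (x y : car M) : x ⊔ (x ⊓ y) = x. Proof. apply HM. Qed.
Lemma mabs (x y : car M) : x ⊓ (x ⊔ y) = x. Proof. apply HM. Qed.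
Lemma mD (x y z : car M) : x ⊓ (y ⊔ z) = x ⊓ y ⊔ x ⊓ z. Proof. apply HM. Qed.
Lemma j0 (x : car M) : x ⊔ dbot = x. Proof. apply HM. Qed.
Lemma mT (x : car M) : x ⊓ dtop = x. Proof. apply HM. Qed.
Lemma nn (x : car M) : dneg (dneg x) = x. Proof. apply HM. Qed.
Lemma nm (x y : car M) : dneg (x ⊓ y) = dneg x ⊔ dneg y. Proof. apply HM. Qed.
Lemma n1 : dneg (@dtop M) = dbot. Proof. apply HM. Qed.

Lemma mDr (x y z : car M) : (y ⊔ z) ⊓ x = y ⊓ x ⊔ z ⊓ x.
Proof. rewrite mC, mD, (mC x y), (mC x z). reflexivity. Qed.
Lemma n0 : dneg (@dbot M) = dtop. Proof. rewrite <- n1, nn. reflexivity. Qed.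
Lemma nj (x y : car M) : dneg (x ⊔ y) = dneg x ⊓ dneg y.
Proof. rewrite <- (nn x) at 1. rewrite <- (nn y) at 1. rewrite <- nm, nn. reflexivity. Qed.
Lemma jI (x : car M) : x ⊔ x = x.
Proof. rewrite <- (mabs x x) at 2. apply jabs. Qed.
Lemma mI (x : car M) : x ⊓ x = x.
Proof. rewrite <- (jabs x x) at 2. apply mabs. Qed.
Lemma m0 (x : car M) : x ⊓ dbot = dbot.
Proof. rewrite mC. rewrite <- (j0 x) at 1. rewrite jC. apply mabs. Qed.
Lemma j1 (x : car M) : x ⊔ dtop = dtop.
Proof. rewrite jC. rewrite <- (mT x) at 1. rewrite mC. apply jabs. Qed.
Lemma jD (x y z : car M) : x ⊔ (y ⊓ z) = (x ⊔ y) ⊓ (x ⊔ z).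
Proof.
  symmetry. rewrite mD, (mC (x ⊔ y) x), mabs, mDr, jA, jabs. reflexivity.
Qed.

Definition le (x y : car M) := x ⊓ y = x.

Lemma le_refl x : le x x. Proof. apply mI. Qed.
Lemma le_antisym x y : le x y -> le y x -> x = y.
Proof. unfold le; intros H1 H2. transitivity (x ⊓ y); [symmetry; exact H1 | rewrite mC; exact H2]. Qed.
Lemma le_trans x y z : le x y -> le y z -> le x z.
Proof. unfold le; intros H1 H2. rewrite <- H1 at 1. rewrite <- mA, H2, H1. reflexivity. Qed.
Lemma le_trans' c r m w : le c r -> le m c -> le r w -> le m w.
Proof. intros H1 H2 H3. eapply le_trans; [eapply le_trans|]; eassumption. Qed.
Lemma le_join x y : le x y <-> x ⊔ y = y.
Proof. unfold le; split; intro H.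
  - rewrite <- H, jC, mC. apply jabs.
  - rewrite <- H. apply mabs. Qed.
Lemma le_join_l x y z : le x z -> le y z -> le (x ⊔ y) z.
Proof. unfold le; intros H1 H2. rewrite mDr, H1, H2. reflexivity. Qed.
Lemma le_meet_r x y z : le z x -> le z y -> le z (x ⊓ y).
Proof. unfold le; intros H1 H2. rewrite mA, H1, H2. reflexivity. Qed.
Lemma le_meet_l1 x y z : le x z -> le (x ⊓ y) z.
Proof. unfold le; intros H1. rewrite <- mA, (mC y z), mA, H1. reflexivity. Qed.
Lemma le_meet_l2 x y z : le y z -> le (x ⊓ y) z.
Proof. unfold le; intros H1. rewrite <- mA, H1. reflexivity. Qed.
Lemma le_join_r1 x y z : le z x -> le z (x ⊔ y).
Proof. intros H. apply le_join. apply le_join in H. rewrite jA, H. reflexivity. Qed.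
Lemma le_join_r2 x y z : le z y -> le z (x ⊔ y).
Proof. intros H. apply le_join. apply le_join in H. rewrite jA, (jC z x), <- jA, H. reflexivity. Qed.
Lemma le_bot x : le dbot x.
Proof. unfold le. rewrite mC. apply m0. Qed.
Lemma le_top x : le x dtop.
Proof. apply mT. Qed.
Lemma le_neg x y : le x y -> le (dneg y) (dneg x).
Proof. intros H. apply le_join. unfold le in H. rewrite <- nm, mC, H. reflexivity. Qed.

End Lat.

Ltac lnorm M HM :=
  repeat first [ rewrite (nm M HM) | rewrite (nj M HM) | rewrite (nn M HM)
               | rewrite (n0 M HM) | rewrite (n1 M HM) ];
  repeat first [ rewrite (mD M HM) | rewrite (mDr M HM) ].

Ltac lsearch M HM n :=
  match n with
  | O => fail
  | S ?m =>
    lazymatch goal with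
    | |- le M (?x ⊔ ?y) ?z => apply (le_join_l M HM); [lsearch M HM n | lsearch M HM n]
    | |- le M ?z (?x ⊓ ?y) => apply (le_meet_r M HM); [lsearch M HM n | lsearch M HM n]
    | _ => first
      [ exact (le_refl M HM _) | exact (le_bot M HM _) | exact (le_top M HM _)
      | assumption
      | apply (le_meet_l1 M HM); lsearch M HM m
      | apply (le_meet_l2 M HM); lsearch M HM m
      | apply (le_join_r1 M HM); lsearch M HM m
      | apply (le_join_r2 M HM); lsearch M HM m
      | match goal with H : le M ?c ?r |- _ =>
          apply (le_trans' M HM c r _ _ H); [lsearch M HM m | lsearch M HM m] end ]
    end
  end.

Ltac lle M HM := lnorm M HM; first [lsearch M HM 1 | lsearch M HM 2 | lsearch M HM 3 | lsearch M HM 4 | lsearch M HM 5 | lsearch M HM 6].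
Ltac lat M HM := apply (le_antisym M HM); lle M HM.



Definition Qp (M : dmOps) : Prop :=
  forall th, congruence M th -> exists b, skeleton M b /\
    forall x y, th x y <-> x ⊓ b = y ⊓ b.

Section Skel.
Variable M : dmOps.
Hypothesis HM : is_deMorgan M.
Notation S := (skeleton M).

Lemma sk_le1 x : le M dtop (x ⊔ dneg x) -> S x.
Proof. intro H. apply (le_antisym M HM); [apply (le_top M HM)|exact H]. Qed.
Lemma sk_ge x : S x -> le M dtop (x ⊔ dneg x).
Proof. unfold skeleton; intro H; rewrite H; apply (le_refl M HM). Qed.
Lemma sk_top : S dtop.
Proof. apply sk_le1. lle M HM. Qed.
Lemma sk_bot : S dbot.
Proof. apply sk_le1. lle M HM. Qed.
Lemma sk_neg x : S x -> S (dneg x).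
Proof. unfold skeleton; intro H. rewrite (nn M HM), (jC M HM). exact H. Qed.
Lemma sk_join x y : S x -> S y -> S (x ⊔ y).
Proof. intros Hx Hy. apply sk_ge in Hx. apply sk_ge in Hy. apply sk_le1.
  eapply (le_trans M HM); [apply (le_meet_r M HM); [exact Hx|exact Hy]|]. lle M HM. Qed.
Lemma sk_meet x y : S x -> S y -> S (x ⊓ y).
Proof. intros Hx Hy. apply sk_ge in Hx. apply sk_ge in Hy. apply sk_le1.
  eapply (le_trans M HM); [apply (le_meet_r M HM); [exact Hx|exact Hy]|]. lle M HM. Qed.
Lemma sk_disj x : S x -> le M (x ⊓ dneg x) dbot.
Proof. unfold skeleton; intro H. assert (H' := f_equal dneg H).
  rewrite (nj M HM), (nn M HM), (n1 M HM) in H'. unfold le. rewrite (m0 M HM), (mC M HM x), H'. reflexivity. Qed.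
Lemma sk_disj' x : S x -> le M (dneg x ⊓ x) dbot.
Proof. intro H. rewrite (mC M HM). apply sk_disj; auto. Qed.

Section Phi.
Variable phi : car M -> car M -> Prop.
Hypothesis Hphi : congruence_on M S phi.

Definition thF x y := exists c, S c /\ phi c dtop /\ x ⊓ c = y ⊓ c.

Lemma phi_refl x : S x -> phi x x. Proof. apply Hphi. Qed.
Lemma phi_sym x y : phi x y -> phi y x. Proof. apply Hphi. Qed.
Lemma phi_trans x y z : phi x y -> phi y z -> phi x z. Proof. apply Hphi. Qed.
Lemma phi_join x x' y y' : phi x x' -> phi y y' -> phi (x ⊔ y) (x' ⊔ y'). Proof. apply Hphi. Qed.
Lemma phi_meet x x' y y' : phi x x' -> phi y y' -> phi (x ⊓ y) (x' ⊓ y'). Proof. apply Hphi. Qed.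
Lemma phi_neg x x' : phi x x' -> phi (dneg x) (dneg x'). Proof. apply Hphi. Qed.
Lemma phi_S x y : phi x y -> S x /\ S y. Proof. apply Hphi. Qed.

Lemma phi_meet1 c c' : phi c dtop -> phi c' dtop -> phi (c ⊓ c') dtop.
Proof. intros H1 H2. rewrite <- (mI M HM dtop). apply phi_meet; auto. Qed.

Lemma thF_cong : congruence M thF.
Proof.
  repeat split.
  - intro x. exists dtop. split; [apply sk_top|split; [apply phi_refl, sk_top|reflexivity]].
  - intros x y [c [Hc [Hp He]]]. exists c; auto.
  - intros x y z [c [Hc [Hp He]]] [c' [Hc' [Hp' He']]]. exists (c ⊓ c').
    split; [apply sk_meet; auto|split; [apply phi_meet1; auto|]].
    rewrite !(mA M HM), He, (mC M HM (y ⊓ c) c'), (mC M HM (z ⊓ c) c'), !(mA M HM),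
      (mC M HM c' y), (mC M HM c' z), He'. reflexivity.
  - intros x x' y y' [c [Hc [Hp He]]] [c' [Hc' [Hp' He']]]. exists (c ⊓ c').
    split; [apply sk_meet; auto|split; [apply phi_meet1; auto|]].
    transitivity ((x ⊓ c) ⊓ c' ⊔ (y ⊓ c') ⊓ c); [lat M HM|].
    rewrite He, He'. lat M HM.
  - intros x x' y y' [c [Hc [Hp He]]] [c' [Hc' [Hp' He']]]. exists (c ⊓ c').
    split; [apply sk_meet; auto|split; [apply phi_meet1; auto|]].
    transitivity ((x ⊓ c) ⊓ (y ⊓ c')); [lat M HM|].
    rewrite He, He'. lat M HM.
  - intros x x' [c [Hc [Hp He]]]. exists c. split; auto. split; auto.
    pose proof (sk_disj _ Hc). pose proof (sk_disj' _ Hc).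
    transitivity (dneg (x ⊓ c) ⊓ c); [lat M HM|]. rewrite He. lat M HM.
Qed.

Lemma thF_ext x y : S x -> S y -> (thF x y <-> phi x y).
Proof.
  intros Hx Hy. split.
  - intros [c [Hc [Hp He]]].
    assert (A : phi (x ⊓ c) x). { rewrite <- (mT M HM x) at 2. apply phi_meet; auto. apply phi_refl; auto. }
    assert (B : phi (y ⊓ c) y). { rewrite <- (mT M HM y) at 2. apply phi_meet; auto. apply phi_refl; auto. }
    rewrite He in A. eapply phi_trans; [apply phi_sym; exact A| exact B].
  - intro H. exists ((x ⊓ y) ⊔ (dneg x ⊓ dneg y)).
    split; [apply sk_join; apply sk_meet; auto; apply sk_neg; auto|].
    split.
    + replace (@dtop M) with ((y ⊓ y) ⊔ (dneg y ⊓ dneg y)).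
      * apply phi_join; apply phi_meet; auto using phi_refl, phi_neg, sk_neg.
      * rewrite !(mI M HM). exact Hy.
    + pose proof (sk_disj _ Hx). pose proof (sk_disj _ Hy).
      transitivity (x ⊓ y); [lat M HM|symmetry; lat M HM].
Qed.

End Phi.

Lemma Q_perfect : Qp M -> perfect_extension M S.
Proof.
  intros HQ phi Hphi. exists (thF phi). split.
  - split; [apply thF_cong; auto|intros; apply thF_ext; auto].
  - intros th' [Hc' Hext'] x y.
    destruct (HQ _ Hc') as [e' [He' Hr']].
    destruct (HQ _ (thF_cong phi Hphi)) as [e [He Hr]].
    assert (E1 : e ⊓ e' = e').
    { assert (th' e dtop).
      { apply Hext'; auto using sk_top. apply (thF_ext phi Hphi); auto using sk_top.
        apply Hr. rewrite (mI M HM), (mC M HM), (mT M HM). reflexivity. }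
      apply Hr' in H. rewrite H, (mC M HM), (mT M HM). reflexivity. }
    assert (E2 : e' ⊓ e = e).
    { assert (thF phi e' dtop).
      { apply (thF_ext phi Hphi); auto using sk_top. apply Hext'; auto using sk_top.
        apply Hr'. rewrite (mI M HM), (mC M HM), (mT M HM). reflexivity. }
      apply Hr in H. rewrite H, (mC M HM), (mT M HM). reflexivity. }
    assert (e = e') by (rewrite <- E1, <- E2 at 1; apply (mC M HM)). subst e'.
    rewrite Hr, Hr'. reflexivity.
Qed.

Lemma perfect_Q : finite_alg M -> perfect_extension M S -> Qp M.
Proof.
  intros [l Hl] HP th Hth.
  set (phi := fun x y => S x /\ S y /\ th x y).
  assert (Hphi : congruence_on M S phi).
  { destruct Hth as [R1 [R2 [R3 [R4 [R5 R6]]]]].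
    unfold phi; split; [|split; [|split; [|split; [|split; [|split]]]]].
    - intros x y [? [? ?]]; auto.
    - intros x Hx; auto.
    - intros x y [? [? ?]]; auto.
    - intros x y z [? [? ?]] [? [? ?]]; repeat split; eauto.
    - intros x x' y y' [? [? ?]] [? [? ?]]; repeat split; [apply sk_join|apply sk_join|apply R4]; auto.
    - intros x x' y y' [? [? ?]] [? [? ?]]; repeat split; [apply sk_meet|apply sk_meet|apply R5]; auto.
    - intros x x' [? [? ?]]; repeat split; [apply sk_neg|apply sk_neg|apply R6]; auto. }
  destruct (HP phi Hphi) as [th0 [_ Huniq]].
  assert (E1 : forall x y, th x y <-> th0 x y).
  { apply Huniq. split; auto. intros x y Hx Hy. unfold phi; tauto. }
  assert (E2 : forall x y, thF phi x y <-> th0 x y).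
  { apply Huniq. split; [apply thF_cong; auto|]. intros; apply thF_ext; auto. }
  assert (Hmin : forall l', exists e, S e /\ phi e dtop /\
            forall c, In c l' -> S c -> phi c dtop -> le M e c).
  { induction l' as [|a l' IH].
    - exists dtop. split; [apply sk_top|split; [apply phi_refl; auto; apply sk_top|]].
      intros c [].
    - destruct IH as [e [He [Hpe Hle]]].
      destruct (classic (S a /\ phi a dtop)) as [[Ha Hpa]|Hn].
      + exists (a ⊓ e). split; [apply sk_meet; auto|split; [apply phi_meet1; auto|]].
        intros c [<-|Hc] Sc Pc; [apply (le_meet_l1 M HM), (le_refl M HM)|].
        apply (le_meet_l2 M HM); auto.
      + exists e. split; auto. split; auto. intros c [<-|Hc] Sc Pc; [tauto|auto]. }
  destruct (Hmin l) as [e [He [Hpe Hle]]].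
  exists e. split; auto. intros x y. rewrite E1, <- E2. split.
  - intros [c [Hc [Hp Hxy]]]. specialize (Hle c (Hl c) Hc Hp). unfold le in Hle.
    rewrite <- Hle, (mC M HM e c), !(mA M HM), Hxy. reflexivity.
  - intro H. exists e. auto.
Qed.

End Skel.


Definition hom_bij (X Y : dmOps) (h : car X -> car Y) : Prop :=
  (forall x x', h x = h x' -> x = x') /\ (forall y, exists x, h x = y) /\
  (forall x y, h (x ⊔ y) = h x ⊔ h y) /\ (forall x y, h (x ⊓ y) = h x ⊓ h y) /\
  (forall x, h (dneg x) = dneg (h x)) /\ h dbot = dbot /\ h dtop = dtop.

Lemma Q_transfer X Y h : hom_bij X Y h -> Qp Y -> Qp X.
Proof.
  intros [Hi [Hs [Hj [Hm [Hn [H0 H1]]]]]] HQ th [R1 [R2 [R3 [R4 [R5 R6]]]]].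
  set (th' := fun y y' => forall x x', h x = y -> h x' = y' -> th x x').
  assert (Hc : congruence Y th').
  { unfold th'; split; [|split; [|split; [|split; [|split]]]].
    - intros y x x' <- E. apply Hi in E. subst. auto.
    - intros y y' H x x' E E'. apply R2. auto.
    - intros y1 y2 y3 H12 H23 x x' E E'. destruct (Hs y2) as [x2 E2]. eauto.
    - intros y1 y1' y2 y2' Ha Hb x x' E E'.
      destruct (Hs y1) as [a1 <-]. destruct (Hs y1') as [a1' <-].
      destruct (Hs y2) as [a2 <-]. destruct (Hs y2') as [a2' <-].
      rewrite <- Hj in E, E'. apply Hi in E. apply Hi in E'. subst. auto.
    - intros y1 y1' y2 y2' Ha Hb x x' E E'.
      destruct (Hs y1) as [a1 <-]. destruct (Hs y1') as [a1' <-].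
      destruct (Hs y2) as [a2 <-]. destruct (Hs y2') as [a2' <-].
      rewrite <- Hm in E, E'. apply Hi in E. apply Hi in E'. subst. auto.
    - intros y1 y1' Ha x x' E E'.
      destruct (Hs y1) as [a1 <-]. destruct (Hs y1') as [a1' <-].
      rewrite <- Hn in E, E'. apply Hi in E. apply Hi in E'. subst. auto. }
  destruct (HQ th' Hc) as [b [Hb Hr]]. destruct (Hs b) as [bx <-].
  exists bx. split.
  - unfold skeleton in *. apply Hi. rewrite Hj, Hn, H1. exact Hb.
  - intros x x'. split.
    + intro H. assert (K : th' (h x) (h x')).
      { intros z z' E E'. apply Hi in E. apply Hi in E'. subst. auto. }
      apply Hr in K. apply Hi. rewrite !Hm. exact K.
    + intro H. apply (f_equal h) in H. rewrite !Hm in H. apply Hr in H. apply H; auto.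
Qed.

Lemma Q_simple M (HM : is_deMorgan M) :
  (forall th, congruence M th -> th dbot dtop \/ forall x y, th x y -> x = y) -> Qp M.
Proof.
  intros Hs th Hth. destruct (Hs th Hth) as [H|H].
  - exists dbot. split; [apply sk_bot; auto|]. intros x y. rewrite !(m0 M HM). split; auto.
    intros _. destruct Hth as [R1 [R2 [R3 [R4 [R5 R6]]]]].
    assert (forall z, th z dbot).
    { intro z. rewrite <- (mT M HM z) at 1. rewrite <- (m0 M HM z). apply R5; [apply R1|apply R2; exact H]. }
    eauto.
  - exists dtop. split; [apply sk_top; auto|]. intros x y. rewrite !(mT M HM). split; auto.
    intros ->. apply (proj1 Hth).
Qed.

Lemma dm_M1 : is_deMorgan M1.
Proof.
  repeat split; simpl; intros;
  repeat match goal with x : car M1 |- _ => destruct x | x : m1 |- _ => destruct x end; reflexivity.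
Qed.

Lemma sig_eq_val (P : m1 -> Prop) (x y : {z | P z}) : proj1_sig x = proj1_sig y -> x = y.
Proof. destruct x, y; simpl; intros; subst. f_equal. apply proof_irrelevance. Qed.

Lemma dm_sub P Hj Hm Hn H0 H1 : is_deMorgan (sub_M1 P Hj Hm Hn H0 H1).
Proof.
  destruct dm_M1 as [A1 [A2 [A3 [A4 [A5 [A6 [A7 [A8 [A9 [A10 [A11 A12]]]]]]]]]]].
  repeat split; intros; apply sig_eq_val; simpl; auto.
Qed.

Lemma dm_01 : is_deMorgan M1_01. Proof. apply dm_sub. Qed.
Lemma dm_0a1 : is_deMorgan M1_0a1. Proof. apply dm_sub. Qed.

Lemma m1_simple (P : m1 -> Prop) (R : m1 -> m1 -> Prop) :
  (forall x y, R x y -> P x /\ P y) -> (forall x y, R x y -> R y x) ->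
  (forall x y z, R x y -> R y z -> R x z) ->
  (forall x y z, R x y -> P z -> R (m1_meet x z) (m1_meet y z)) ->
  (forall x y, R x y -> R (m1_neg x) (m1_neg y)) ->
  forall x y, R x y -> x <> y -> R m1_0 m1_1.
Proof.
  intros HP Hs Ht Hm Hn x y H Hne. pose proof (HP _ _ H) as [Px Py].
  pose proof (Hn _ _ H) as N.
  destruct x, y; try congruence;
  try (assert (Ka := Hm _ _ m1_a H ltac:(assumption)));
  try (assert (Kb := Hm _ _ m1_b H ltac:(assumption)));
  simpl in *;
  try assert (Na := Hn _ _ Ka); try assert (Nb := Hn _ _ Kb); simpl in *;
  let c := (first [assumption | apply Hs; assumption]) in
  first [ c
        | solve [apply (Ht _ m1_a); c]
        | solve [apply (Ht _ m1_b); c] ].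
Qed.

Lemma Q_M1 : Qp M1.
Proof.
  apply Q_simple; [exact dm_M1|]. intros th [R1 [R2 [R3 [R4 [R5 R6]]]]].
  destruct (classic (th m1_0 m1_1)) as [H|H]; [left; exact H|right].
  intros x y Hxy. destruct (classic (x = y)) as [E|E]; auto. exfalso. apply H.
  apply (m1_simple (fun _ => True) th) with x y; auto.
Qed.

Lemma Q_sub P Hj Hm Hn H0 H1 : Qp (sub_M1 P Hj Hm Hn H0 H1).
Proof.
  apply Q_simple; [apply dm_sub|]. intros th [R1 [R2 [R3 [R4 [R5 R6]]]]].
  set (R := fun u v => exists p q, th (exist P u p) (exist P v q)).
  destruct (classic (R m1_0 m1_1)) as [H|H].
  - left. destruct H as [p [q H]]. simpl.
    replace H0 with p by apply proof_irrelevance. replace H1 with q by apply proof_irrelevance. exact H.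
  - right. intros [x px] [y py] Hxy. apply sig_eq_val. simpl.
    destruct (classic (x = y)) as [E|E]; auto. exfalso. apply H.
    apply (m1_simple P R) with x y; unfold R.
    + intros u v [p [q _]]; auto.
    + intros u v [p [q Huv]]; eauto.
    + intros u v w [p [q Huv]] [p' [q' Hvw]]. exists p, q'. apply R3 with (exist P v q); auto.
      replace q with p' by apply proof_irrelevance. exact Hvw.
    + intros u v w [p [q Huv]] Pw. exists (Hm _ _ p Pw), (Hm _ _ q Pw).
      assert (K := R5 _ _ (exist P w Pw) (exist P w Pw) Huv (R1 _)). simpl in K.
      replace (Hm u w p Pw) with (sub_meet P Hm (exist P u p) (exist P w Pw)) by apply proof_irrelevance.
      replace (Hm v w q Pw) with (sub_meet P Hm (exist P v q) (exist P w Pw)) by apply proof_irrelevance.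
      exact K.
    + intros u v [p [q Huv]]. exists (Hn _ p), (Hn _ q).
      assert (K := R6 _ _ Huv). simpl in K.
      replace (Hn u p) with (sub_neg P Hn (exist P u p)) by apply proof_irrelevance.
      replace (Hn v q) with (sub_neg P Hn (exist P v q)) by apply proof_irrelevance.
      exact K.
    + exists px, py. exact Hxy.
    + exact E.
Qed.

Lemma Q_01 : Qp M1_01. Proof. apply Q_sub. Qed.
Lemma Q_0a1 : Qp M1_0a1. Proof. apply Q_sub. Qed.

Lemma dm_prod A B : is_deMorgan A -> is_deMorgan B -> is_deMorgan (prod_alg A B).
Proof.
  intros [A1 [A2 [A3 [A4 [A5 [A6 [A7 [A8 [A9 [A10 [A11 A12]]]]]]]]]]]
         [B1 [B2 [B3 [B4 [B5 [B6 [B7 [B8 [B9 [B10 [B11 B12]]]]]]]]]]].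
  repeat split; simpl; intros;
  repeat match goal with p : (_ * _)%type |- _ => destruct p end; simpl;
  f_equal; auto.
Qed.

Lemma dm_pow A n : is_deMorgan A -> is_deMorgan (pow_alg A n).
Proof.
  intros [A1 [A2 [A3 [A4 [A5 [A6 [A7 [A8 [A9 [A10 [A11 A12]]]]]]]]]]].
  repeat split; simpl; intros; apply functional_extensionality; intros; auto.
Qed.

Lemma Q_prod A B : is_deMorgan A -> is_deMorgan B -> Qp A -> Qp B -> Qp (prod_alg A B).
Proof.
  intros HA HB QA QB th [R1 [R2 [R3 [R4 [R5 R6]]]]].
  set (thA := fun a a' => th (a, dbot) (a', dbot)).
  set (thB := fun b b' => th (dbot, b) (dbot, b')).
  assert (CA : congruence A thA).
  { unfold thA; split; [|split; [|split; [|split; [|split]]]]; intros; eauto.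
    - rewrite <- (jI B HB dbot). apply (R4 _ _ _ _ H H0).
    - rewrite <- (mI B HB dbot). apply (R5 _ _ _ _ H H0).
    - assert (K := R5 _ _ (dtop, dbot) (dtop, dbot) (R6 _ _ H) (R1 _)). simpl in K.
      rewrite !(mT A HA), (m0 B HB) in K. exact K. }
  assert (CB : congruence B thB).
  { unfold thB; split; [|split; [|split; [|split; [|split]]]]; intros; eauto.
    - rewrite <- (jI A HA dbot). apply (R4 _ _ _ _ H H0).
    - rewrite <- (mI A HA dbot). apply (R5 _ _ _ _ H H0).
    - assert (K := R5 _ _ (dbot, dtop) (dbot, dtop) (R6 _ _ H) (R1 _)). simpl in K.
      rewrite !(mT B HB), (m0 A HA) in K. exact K. }
  destruct (QA _ CA) as [bA [SA HrA]]. destruct (QB _ CB) as [bB [SB HrB]].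
  exists (bA, bB). split.
  - unfold skeleton in *. simpl. rewrite SA, SB. reflexivity.
  - intros [a b] [a' b']. simpl. split.
    + intro H. f_equal.
      * apply HrA. unfold thA.
        assert (K := R5 _ _ (dtop, dbot) (dtop, dbot) H (R1 _)). simpl in K.
        rewrite !(mT A HA), !(m0 B HB) in K. exact K.
      * apply HrB. unfold thB.
        assert (K := R5 _ _ (dbot, dtop) (dbot, dtop) H (R1 _)). simpl in K.
        rewrite !(mT B HB), !(m0 A HA) in K. exact K.
    + intro H. inversion H as [[E1 E2]].
      apply HrA in E1. apply HrB in E2. unfold thA, thB in *.
      assert (K := R4 _ _ _ _ E1 E2). simpl in K.
      rewrite !(j0 A HA), (jC B HB dbot b), (jC B HB dbot b'), !(j0 B HB) in K. exact K.
Qed.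

Definition fin_l a b (i : fin a) : fin (a + b) :=
  exist _ (proj1_sig i) (Nat.lt_lt_add_r _ _ _ (proj2_sig i)).
Lemma fin_r_pf a b n : n < b -> a + n < a + b. Proof. lia. Qed.
Definition fin_r a b (i : fin b) : fin (a + b) :=
  exist _ (a + proj1_sig i) (fin_r_pf a b _ (proj2_sig i)).
Lemma glue_pf a b n : n < a + b -> ~ n < a -> n - a < b. Proof. lia. Qed.
Definition glue {X : Type} a b (h1 : fin a -> X) (h2 : fin b -> X) (i : fin (a + b)) : X :=
  let (n, Hn) := i in
  match lt_dec n a with
  | left p => h1 (exist _ n p)
  | right p => h2 (exist _ (n - a) (glue_pf a b n Hn p))
  end.

Lemma fin_eq k (i j : fin k) : proj1_sig i = proj1_sig j -> i = j.
Proof. destruct i, j; simpl; intros; subst. f_equal. apply proof_irrelevance. Qed.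

Definition splitf A a b (h : car (pow_alg A (a + b))) : car (prod_alg (pow_alg A a) (pow_alg A b)) :=
  (fun i => h (fin_l a b i), fun i => h (fin_r a b i)).

Lemma split_hb A a b : hom_bij (pow_alg A (a + b)) (prod_alg (pow_alg A a) (pow_alg A b)) (splitf A a b).
Proof.
  split; [|split; [|repeat split]].
  - intros h h' E. unfold splitf in E. inversion E as [[E1 E2]].
    apply functional_extensionality. intros [n p].
    destruct (lt_dec n a) as [q|q].
    + assert (K := equal_f E1 (exist _ n q)). simpl in K.
      replace (exist (fun i => i < a + b) n p) with (fin_l a b (exist _ n q)) by (apply fin_eq; reflexivity).
      exact K.
    + assert (K := equal_f E2 (exist _ (n - a) (glue_pf a b n p q))). simpl in K.
      replace (exist (fun i => i < a + b) n p) with (fin_r a b (exist _ (n - a) (glue_pf a b n p q)))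
        by (apply fin_eq; simpl; lia).
      exact K.
  - intros [h1 h2]. exists (glue a b h1 h2). unfold splitf. f_equal; apply functional_extensionality.
    + intros [n p]. simpl. destruct (lt_dec n a) as [q|q]; [|lia].
      f_equal. apply fin_eq. reflexivity.
    + intros [n p]. simpl. destruct (lt_dec (a + n) a) as [q|q]; [lia|].
      f_equal. apply fin_eq. simpl. lia.
Qed.

Definition idx0 : fin 1 := exist _ 0 (le_n 1).

Lemma ev0_hb A : hom_bij (pow_alg A 1) A (fun h => h idx0).
Proof.
  split; [|split; [|repeat split]].
  - intros h h' E. apply functional_extensionality. intros [n p].
    destruct n; [|lia]. replace (exist (fun i => i < 1) 0 p) with idx0 by (apply fin_eq; reflexivity).
    exact E.
  - intro y. exists (fun _ => y). reflexivity.
Qed.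

Lemma Q_pow A n : is_deMorgan A -> Qp A -> Qp (pow_alg A n).
Proof.
  intros HA QA. induction n as [|n IH].
  - intros th Hth. exists dtop. split.
    + apply sk_top, dm_pow, HA.
    + intros x y. assert (E : forall z w : car (pow_alg A 0), z = w).
      { intros z w. apply functional_extensionality. intros [k p]. lia. }
      split; intros _; [apply E|]. rewrite (E x y). apply (proj1 Hth).
  - change (S n) with (1 + n).
    apply (Q_transfer _ _ _ (split_hb A 1 n)).
    apply Q_prod; try apply dm_pow; auto.
    apply (Q_transfer _ _ _ (ev0_hb A)). exact QA.
Qed.

Definition Palg i j k := prod_alg (pow_alg M1_01 i) (prod_alg (pow_alg M1_0a1 j) (pow_alg M1 k)).

Lemma Q_P i j k : Qp (Palg i j k).
Proof.
  unfold Palg. apply Q_prod; repeat apply dm_prod; repeat apply dm_pow;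
    auto using dm_01, dm_0a1, dm_M1.
  - apply Q_pow; auto using dm_01, Q_01.
  - apply Q_prod; repeat apply dm_pow; auto using dm_0a1, dm_M1.
    + apply Q_pow; auto using dm_0a1, Q_0a1.
    + apply Q_pow; auto using dm_M1, Q_M1.
Qed.


Section RelSec.
Variable M : dmOps.
Hypothesis HM : is_deMorgan M.
Notation S := (skeleton M).
Notation le := (le M).

Definition REL (e : car M) (P : dmOps) := exists g : car P -> car M,
  (forall u v, g u = g v -> u = v) /\ (forall x, le x e -> exists u, g u = x) /\
  (forall u, le (g u) e) /\
  (forall u v, g (u ⊔ v) = g u ⊔ g v) /\ (forall u v, g (u ⊓ v) = g u ⊓ g v) /\
  (forall u, g (dneg u) = dneg (g u) ⊓ e) /\ g dbot = dbot /\ g dtop = e.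

Lemma REL_iso P : REL dtop P -> isomorphic M P.
Proof.
  intros [g [Gi [Gr [Gl [Gj [Gm [Gn [G0 G1]]]]]]]].
  set (f := fun x => proj1_sig (constructive_indefinite_description _ (Gr x (le_top M HM x)))).
  assert (Hf : forall x, g (f x) = x).
  { intro x. unfold f. destruct (constructive_indefinite_description _ _). exact e. }
  exists f, g. split; [exact Hf|]. split; [intro y; apply Gi; apply Hf|].
  split; [intros; apply Gi; rewrite Gj, !Hf; reflexivity|].
  split; [intros; apply Gi; rewrite Gm, !Hf; reflexivity|].
  split; [intros; apply Gi; rewrite Gn, !Hf, (mT M HM); reflexivity|].
  split; apply Gi; rewrite Hf; auto.
Qed.

Lemma REL_transfer e P A phi : REL e A -> hom_bij P A phi -> REL e P.
Proof.
  intros [g [Gi [Gr [Gl [Gj [Gm [Gn [G0 G1]]]]]]]] [Hi [Hs [Hj [Hm [Hn [H0 H1]]]]]].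
  exists (fun u => g (phi u)). repeat split.
  - intros u v E. apply Hi, Gi, E.
  - intros x Hx. destruct (Gr x Hx) as [u Hu]. destruct (Hs u) as [v <-]. eauto.
  - intro u. apply Gl.
  - intros u v. rewrite Hj, Gj. reflexivity.
  - intros u v. rewrite Hm, Gm. reflexivity.
  - intros u. rewrite Hn, Gn. reflexivity.
  - rewrite H0, G0. reflexivity.
  - rewrite H1, G1. reflexivity.
Qed.

Lemma sk_compl e1 e2 : S e2 -> le (e1 ⊓ e2) dbot -> le e1 (dneg e2).
Proof.
  intros H2 H. unfold skeleton in H2. rewrite <- (mT M HM e1) at 1. rewrite <- H2. lle M HM.
Qed.

Lemma comb_inj a b e1 e2 : le a e1 -> le b e2 -> le (e1 ⊓ e2) dbot -> (a ⊔ b) ⊓ e1 = a.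
Proof. intros. lat M HM. Qed.

Lemma comb_meet a a' b b' e1 e2 : le a e1 -> le a' e1 -> le b e2 -> le b' e2 ->
  le (e1 ⊓ e2) dbot -> (a ⊓ a') ⊔ (b ⊓ b') = (a ⊔ b) ⊓ (a' ⊔ b').
Proof. intros. lat M HM. Qed.

Lemma comb_neg a b e1 e2 : le e1 (dneg b) -> le e2 (dneg a) ->
  (dneg a ⊓ e1) ⊔ (dneg b ⊓ e2) = dneg (a ⊔ b) ⊓ (e1 ⊔ e2).
Proof. intros. lat M HM. Qed.

Lemma REL_comb e1 e2 P1 P2 : S e1 -> S e2 -> le (e1 ⊓ e2) dbot ->
  REL e1 P1 -> REL e2 P2 -> REL (e1 ⊔ e2) (prod_alg P1 P2).
Proof.
  intros S1 S2 D [g1 [Gi1 [Gr1 [Gl1 [Gj1 [Gm1 [Gn1 [G01 G11]]]]]]]]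
                 [g2 [Gi2 [Gr2 [Gl2 [Gj2 [Gm2 [Gn2 [G02 G12]]]]]]]].
  assert (D' : le (e2 ⊓ e1) dbot) by (rewrite (mC M HM); exact D).
  exists (fun p => g1 (fst p) ⊔ g2 (snd p)). repeat split.
  - intros [u v] [u' v'] E. simpl in E.
    assert (E1 := f_equal (fun z => z ⊓ e1) E). simpl in E1.
    rewrite !(comb_inj _ _ e1 e2) in E1; auto.
    assert (E2 := f_equal (fun z => z ⊓ e2) E). simpl in E2.
    rewrite (jC M HM (g1 u)), (jC M HM (g1 u')) in E2.
    rewrite !(comb_inj _ _ e2 e1) in E2; auto.
    apply Gi1 in E1. apply Gi2 in E2. subst. reflexivity.
  - intros x Hx. destruct (Gr1 (x ⊓ e1)) as [u Hu]; [lle M HM|].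
    destruct (Gr2 (x ⊓ e2)) as [v Hv]; [lle M HM|].
    exists (u, v). simpl. rewrite Hu, Hv. clear - HM Hx. unfold Submission.le in Hx. symmetry. rewrite <- Hx at 1. lat M HM.
  - intros [u v]. simpl. specialize (Gl1 u). specialize (Gl2 v). lle M HM.
  - intros [u v] [u' v']. simpl. rewrite Gj1, Gj2. lat M HM.
  - intros [u v] [u' v']. simpl. rewrite Gm1, Gm2.
    apply (comb_meet _ _ _ _ e1 e2); auto.
  - intros [u v]. simpl. rewrite Gn1, Gn2. apply comb_neg.
    + eapply (le_trans M HM); [apply (sk_compl e1 e2 S2 D)|]. apply (le_neg M HM). auto.
    + eapply (le_trans M HM); [apply (sk_compl e2 e1 S1 D')|]. apply (le_neg M HM). auto.
  - simpl. rewrite G01, G02. apply (jI M HM).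
  - simpl. rewrite G11, G12. reflexivity.
Qed.

End RelSec.


Section Atom.
Variable M : dmOps.
Hypothesis HM : is_deMorgan M.
Hypothesis HQ : Qp M.
Notation S := (skeleton M).
Notation le := (le M).
Variable e : car M.
Hypothesis He : S e.
Hypothesis Hat : forall b, S b -> le b e -> b = dbot \/ b = e.

Lemma eD : le (dneg e ⊓ e) dbot. Proof. apply sk_disj'; auto. Qed.
Lemma eD' : le (e ⊓ dneg e) dbot. Proof. apply sk_disj; auto. Qed.

Section Fd.
Variable d : car M.
Hypothesis Hd : le d e.
Definition Fd x := (x ⊓ e) ⊔ d.
Definition Gd x := x ⊓ (dneg d ⊓ e).
Lemma FJ x y : Fd (x ⊔ y) = Fd x ⊔ Fd y. Proof. unfold Fd. lat M HM. Qed.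
Lemma FM x y : Fd (x ⊓ y) = Fd x ⊓ Fd y. Proof. unfold Fd. lat M HM. Qed.
Lemma GJ x y : Gd (x ⊔ y) = Gd x ⊔ Gd y. Proof. unfold Gd. lat M HM. Qed.
Lemma GM x y : Gd (x ⊓ y) = Gd x ⊓ Gd y. Proof. unfold Gd. lat M HM. Qed.
Lemma FN x : Fd (dneg x) = dneg (Gd x) ⊓ e.
Proof. unfold Fd, Gd. pose proof eD. pose proof eD'. lat M HM. Qed.
Lemma GN x : Gd (dneg x) = dneg (Fd x) ⊓ e.
Proof. unfold Fd, Gd. pose proof eD. pose proof eD'. lat M HM. Qed.

Definition thd x y := Fd x = Fd y /\ Gd x = Gd y.
Lemma thd_cong : congruence M thd.
Proof.
  unfold thd; split; [|split; [|split; [|split; [|split]]]].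
  - intros; split; reflexivity.
  - intros x y [? ?]; split; congruence.
  - intros x y z [? ?] [? ?]; split; congruence.
  - intros x x' y y' [A1 A2] [B1 B2]. rewrite !FJ, !GJ, A1, A2, B1, B2. split; reflexivity.
  - intros x x' y y' [A1 A2] [B1 B2]. rewrite !FM, !GM, A1, A2, B1, B2. split; reflexivity.
  - intros x x' [A1 A2]. rewrite !FN, !GN, A1, A2. split; reflexivity.
Qed.

Lemma atomA : d = e \/ le d (dneg d).
Proof.
  destruct (HQ _ thd_cong) as [b [Hb Hr]].
  assert (Sbe : S (b ⊓ e)) by (apply sk_meet; auto).
  destruct (Hat (b ⊓ e) Sbe ltac:(lle M HM)) as [E|E].
  - left. assert (K : thd e dbot).
    { apply Hr. rewrite (mC M HM e b), E. lat M HM. }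
    destruct K as [K _]. unfold Fd in K.
    transitivity (dbot ⊓ e ⊔ d); [lat M HM|]. rewrite <- K. lat M HM.
  - right. assert (K : thd d (d ⊓ dneg d)).
    { unfold thd, Fd, Gd. split; lat M HM. }
    apply Hr in K.
    assert (Ed : d = d ⊓ dneg d ⊓ e).
    { transitivity (d ⊓ (b ⊓ e)); [rewrite E; lat M HM|].
      transitivity ((d ⊓ b) ⊓ e); [lat M HM|]. rewrite K.
      transitivity ((d ⊓ dneg d) ⊓ (b ⊓ e)); [lat M HM|]. rewrite E. reflexivity. }
    rewrite Ed at 1. lle M HM.
Qed.
End Fd.

Hypothesis Hne : e <> dbot.

Lemma atomB d : le d e -> d <> dbot -> le (dneg d ⊓ e) d.
Proof.
  intros Hd Hd0. destruct (atomA (dneg d ⊓ e) ltac:(lle M HM)) as [E|E].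
  - exfalso. apply Hd0. assert (K : le d (dneg e)).
    { rewrite <- (nn M HM d). apply (le_neg M HM). unfold Submission.le. rewrite (mC M HM). exact E. }
    pose proof eD'. apply (le_antisym M HM); [|apply (le_bot M HM)]. lle M HM.
  - rewrite (nm M HM), (nn M HM) in E. pose proof eD.
    eapply (le_trans M HM); [apply (le_meet_r M HM); [exact E|apply (le_meet_l2 M HM), (le_refl M HM)]|].
    lle M HM.
Qed.

Definition mid d := le d e /\ d <> dbot /\ d <> e.

Lemma mid_eq d : mid d -> d = dneg d ⊓ e.
Proof.
  intros [H1 [H2 H3]]. apply (le_antisym M HM).
  - apply (le_meet_r M HM); auto. destruct (atomA d H1); [congruence|auto].
  - apply atomB; auto.
Qed.

Lemma mj_eq (x y : car M) : x ⊓ y = x ⊔ y -> x = y.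
Proof.
  intro E. apply (le_antisym M HM).
  - apply (le_trans M HM) with (x ⊔ y); [lle M HM|]. rewrite <- E. lle M HM.
  - apply (le_trans M HM) with (x ⊔ y); [lle M HM|]. rewrite <- E. lle M HM.
Qed.

Lemma range (x : car M) : le x e -> x = dbot \/ x = e \/ mid x.
Proof.
  intro H. destruct (classic (x = dbot)); auto. destruct (classic (x = e)); auto.
  right; right. split; auto.
Qed.

Lemma midC (d1 d2 : car M) : mid d1 -> mid d2 -> d1 <> d2 -> d1 ⊓ d2 = dbot /\ d1 ⊔ d2 = e.
Proof.
  intros M1' M2' Hne12.
  pose proof (mid_eq _ M1') as E1. pose proof (mid_eq _ M2') as E2.
  destruct M1' as [L1 [N1 T1]]. destruct M2' as [L2 [N2 T2]]. split.
  - destruct (range (d1 ⊓ d2) ltac:(lle M HM)) as [E|[E|E]]; auto.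
    + exfalso. apply T1. apply (le_antisym M HM); auto. rewrite <- E. lle M HM.
    + exfalso. apply Hne12. apply mj_eq. pose proof (mid_eq _ E) as E3.
      rewrite E3. transitivity ((dneg d1 ⊓ e) ⊔ (dneg d2 ⊓ e)); [lat M HM|].
      rewrite <- E1, <- E2. reflexivity.
  - destruct (range (d1 ⊔ d2) ltac:(lle M HM)) as [E|[E|E]]; auto.
    + exfalso. apply N1. apply (le_antisym M HM); [|apply (le_bot M HM)]. rewrite <- E. lle M HM.
    + exfalso. apply Hne12. apply mj_eq. pose proof (mid_eq _ E) as E3.
      symmetry. rewrite E3. transitivity ((dneg d1 ⊓ e) ⊓ (dneg d2 ⊓ e)); [lat M HM|].
      rewrite <- E1, <- E2. reflexivity.
Qed.

Lemma midD (d1 d2 d3 : car M) : mid d1 -> mid d2 -> mid d3 -> d1 <> d2 -> d1 <> d3 -> d2 <> d3 -> False.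
Proof.
  intros A B C N12 N13 N23.
  destruct (midC _ _ A B N12) as [X1 _]. destruct (midC _ _ A C N13) as [X2 _].
  destruct (midC _ _ B C N23) as [_ X3].
  destruct A as [L1 [Z1 _]]. apply Z1.
  transitivity (d1 ⊓ (d2 ⊔ d3)); [rewrite X3; unfold Submission.le in L1; auto|].
  rewrite (mD M HM), X1, X2. apply (jI M HM).
Qed.

End Atom.


Lemma REL_sub M e P Hj Hm Hn H0 H1 (ga : m1 -> car M) :
  (forall u v, P u -> P v -> ga u = ga v -> u = v) ->
  (forall x, le M x e -> exists u, P u /\ ga u = x) ->
  (forall u, P u -> le M (ga u) e) ->
  (forall u v, P u -> P v -> ga (m1_join u v) = ga u ⊔ ga v) ->
  (forall u v, P u -> P v -> ga (m1_meet u v) = ga u ⊓ ga v) ->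
  (forall u, P u -> ga (m1_neg u) = dneg (ga u) ⊓ e) ->
  ga m1_0 = dbot -> ga m1_1 = e ->
  REL M e (sub_M1 P Hj Hm Hn H0 H1).
Proof.
  intros Ai Ar Al Aj Am An A0 A1. exists (fun u => ga (proj1_sig u)).
  repeat split.
  - intros [u pu] [v pv] E. apply sig_eq_val. simpl in *. auto.
  - intros x Hx. destruct (Ar x Hx) as [u [pu E]]. exists (exist P u pu). exact E.
  - intros [u pu]. simpl. auto.
  - intros [u pu] [v pv]. simpl. auto.
  - intros [u pu] [v pv]. simpl. auto.
  - intros [u pu]. simpl. auto.
  - exact A0.
  - exact A1.
Qed.

Lemma REL_M1g M e (ga : m1 -> car M) :
  (forall u v, ga u = ga v -> u = v) ->
  (forall x, le M x e -> exists u, ga u = x) ->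
  (forall u, le M (ga u) e) ->
  (forall u v, ga (m1_join u v) = ga u ⊔ ga v) ->
  (forall u v, ga (m1_meet u v) = ga u ⊓ ga v) ->
  (forall u, ga (m1_neg u) = dneg (ga u) ⊓ e) ->
  ga m1_0 = dbot -> ga m1_1 = e -> REL M e M1.
Proof. intros. exists ga. repeat split; auto. Qed.

Lemma fin0_ext X (h h' : fin 0 -> X) : h = h'.
Proof. apply functional_extensionality. intros [k p]. lia. Qed.
Lemma fin1_ext X (h h' : fin 1 -> X) : h idx0 = h' idx0 -> h = h'.
Proof.
  intro E. apply functional_extensionality. intros [n p].
  destruct n; [|lia]. replace (exist (fun i => i < 1) 0 p) with idx0 by (apply fin_eq; reflexivity).
  exact E.
Qed.

Lemma hb100 : hom_bij (Palg 1 0 0) M1_01 (fun p => fst p idx0).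
Proof.
  split; [|split; [|repeat split]].
  - intros [h1 [h2 h3]] [h1' [h2' h3']] E. simpl in E.
    rewrite (fin1_ext _ h1 h1' E), (fin0_ext _ h2 h2'), (fin0_ext _ h3 h3'). reflexivity.
  - intro y. exists ((fun _ => y), ((fun _ => dbot), (fun _ => dbot))). reflexivity.
Qed.
Lemma hb010 : hom_bij (Palg 0 1 0) M1_0a1 (fun p => fst (snd p) idx0).
Proof.
  split; [|split; [|repeat split]].
  - intros [h1 [h2 h3]] [h1' [h2' h3']] E. simpl in E.
    rewrite (fin1_ext _ h2 h2' E), (fin0_ext _ h1 h1'), (fin0_ext _ h3 h3'). reflexivity.
  - intro y. exists ((fun _ => dbot), ((fun _ => y), (fun _ => dbot))). reflexivity.
Qed.
Lemma hb001 : hom_bij (Palg 0 0 1) M1 (fun p => snd (snd p) idx0).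
Proof.
  split; [|split; [|repeat split]].
  - intros [h1 [h2 h3]] [h1' [h2' h3']] E. simpl in E.
    rewrite (fin1_ext _ h3 h3' E), (fin0_ext _ h1 h1'), (fin0_ext _ h2 h2'). reflexivity.
  - intro y. exists ((fun _ => dbot), ((fun _ => dbot), (fun _ => y))). reflexivity.
Qed.

Definition phisum i1 j1 k1 i2 j2 k2 (p : car (Palg (i1 + i2) (j1 + j2) (k1 + k2))) :
  car (prod_alg (Palg i1 j1 k1) (Palg i2 j2 k2)) :=
  let s1 := splitf _ i1 i2 (fst p) in
  let s2 := splitf _ j1 j2 (fst (snd p)) in
  let s3 := splitf _ k1 k2 (snd (snd p)) in
  ((fst s1, (fst s2, fst s3)), (snd s1, (snd s2, snd s3))).

Lemma hb_sum i1 j1 k1 i2 j2 k2 :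
  hom_bij (Palg (i1 + i2) (j1 + j2) (k1 + k2)) (prod_alg (Palg i1 j1 k1) (Palg i2 j2 k2))
    (phisum i1 j1 k1 i2 j2 k2).
Proof.
  destruct (split_hb M1_01 i1 i2) as [I1 [S1 _]].
  destruct (split_hb M1_0a1 j1 j2) as [I2 [S2 _]].
  destruct (split_hb M1 k1 k2) as [I3 [S3 _]].
  split; [|split; [|repeat split]].
  - intros [h1 [h2 h3]] [h1' [h2' h3']] E. unfold phisum in E. simpl in E.
    f_equal; [apply I1|f_equal; [apply I2|apply I3]].
    + exact (f_equal (fun q => (fst (fst q), fst (snd q))) E).
    + exact (f_equal (fun q => (fst (snd (fst q)), fst (snd (snd q)))) E).
    + exact (f_equal (fun q => (snd (snd (fst q)), snd (snd (snd q)))) E).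
  - intros [[a1 [b1 c1]] [a2 [b2 c2]]].
    destruct (S1 (a1, a2)) as [h1 E1]. destruct (S2 (b1, b2)) as [h2 E2].
    destruct (S3 (c1, c2)) as [h3 E3].
    exists (h1, (h2, h3)). cbv beta zeta delta [phisum]. cbn [fst snd]. rewrite E1, E2, E3. reflexivity.
Qed.

Lemma REL_zero M (HM : is_deMorgan M) : REL M dbot (Palg 0 0 0).
Proof.
  exists (fun _ => dbot).
  split; [|split; [|split; [|split; [|split; [|split; [|split]]]]]].
  - intros [h1 [h2 h3]] [h1' [h2' h3']] _.
    rewrite (fin0_ext _ h1 h1'), (fin0_ext _ h2 h2'), (fin0_ext _ h3 h3'). reflexivity.
  - intros x Hx. exists (fun _ => dbot, (fun _ => dbot, fun _ => dbot)).
    apply (le_antisym M HM); [apply (le_bot M HM)|exact Hx].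
  - intros _. apply (le_refl M HM).
  - intros; symmetry; apply (jI M HM).
  - intros; symmetry; apply (mI M HM).
  - intros; symmetry; apply (m0 M HM).
  - reflexivity.
  - reflexivity.
Qed.

Ltac elimP :=
  try (exfalso; match goal with
    | H : sub01 _ |- _ => destruct H as [H|H]; discriminate H
    | H : sub0a1 _ |- _ => destruct H as [H|[H|H]]; discriminate H end).

Section AtomREL.
Variable M : dmOps.
Hypothesis HM : is_deMorgan M.
Hypothesis HQ : Qp M.
Notation S := (skeleton M).
Notation le := (le M).
Variable e : car M.
Hypothesis He : S e.
Hypothesis Hat : forall b, S b -> le b e -> b = dbot \/ b = e.
Hypothesis Hne : e <> dbot.

Ltac fin_tac := simpl; elimP;
  first [reflexivity | assumption | (symmetry; assumption) | lat M HM | lle M HM].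

Lemma atom_REL : exists i j k, REL M e (Palg i j k).
Proof.
  pose proof (eD M HM e He) as ED.
  assert (Le0 : le dbot e) by apply (le_bot M HM).
  assert (Lee : le e e) by apply (le_refl M HM).
  destruct (classic (exists m, mid M e m)) as [[ma Ma]|Nm].
  - pose proof (mid_eq M HM HQ e He Hat ma Ma) as Ema.
    destruct (classic (exists m, mid M e m /\ m <> ma)) as [[mb [Mb Nab]]|Nm2].
    + pose proof (mid_eq M HM HQ e He Hat mb Mb) as Emb.
      destruct (midC M HM HQ e He Hat ma mb Ma Mb ltac:(auto)) as [X1 X2].
      destruct (midC M HM HQ e He Hat mb ma Mb Ma ltac:(auto)) as [X3 X4].
      destruct Ma as [La [Na0 Nae]]. destruct Mb as [Lb [Nb0 Nbe]].
      set (ga := fun u => match u with m1_0 => dbot | m1_a => ma | m1_b => mb | m1_1 => e end).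
      exists 0, 0, 1. apply (REL_transfer M e _ _ _ (REL_M1g M e ga
        ltac:(intros u v E; destruct u, v; simpl in E; try reflexivity; exfalso; congruence)
        ltac:(intros x Hx; destruct (range M e x Hx) as [E|[E|E]];
              [exists m1_0; auto|exists m1_1; auto|];
              destruct (classic (x = ma)); [exists m1_a; auto|];
              destruct (classic (x = mb)); [exists m1_b; auto|];
              exfalso; apply (midD M HM HQ e He Hat ma mb x); auto; split; auto)
        ltac:(intro u; destruct u; fin_tac)
        ltac:(intros u v; destruct u, v; fin_tac)
        ltac:(intros u v; destruct u, v; fin_tac)
        ltac:(intro u; destruct u; fin_tac)
        eq_refl eq_refl) hb001).
    + destruct Ma as [La [Na0 Nae]].
      set (ga := fun u => match u with m1_0 => dbot | m1_a => ma | m1_b => ma | m1_1 => e end).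
      exists 0, 1, 0. apply (REL_transfer M e _ _ _ (REL_sub M e sub0a1 _ _ _ _ _ ga
        ltac:(intros u v pu pv E; destruct u, v; simpl in E; elimP; try reflexivity; exfalso; congruence)
        ltac:(intros x Hx; destruct (range M e x Hx) as [E|[E|E]];
              [exists m1_0; split; [left|]; auto|exists m1_1; split; [right; right|]; auto|];
              destruct (classic (x = ma)); [exists m1_a; split; [right; left|]; auto|];
              exfalso; apply Nm2; exists x; auto)
        ltac:(intros u pu; destruct u; fin_tac)
        ltac:(intros u v pu pv; destruct u, v; fin_tac)
        ltac:(intros u v pu pv; destruct u, v; fin_tac)
        ltac:(intros u pu; destruct u; fin_tac)
        eq_refl eq_refl) hb010).
  - set (ga := fun u => match u with m1_0 => dbot | m1_a => dbot | m1_b => dbot | m1_1 => e end).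
    exists 1, 0, 0. apply (REL_transfer M e _ _ _ (REL_sub M e sub01 _ _ _ _ _ ga
        ltac:(intros u v pu pv E; destruct u, v; simpl in E; elimP; try reflexivity; exfalso; congruence)
        ltac:(intros x Hx; destruct (range M e x Hx) as [E|[E|E]];
              [exists m1_0; split; [left|]; auto|exists m1_1; split; [right|]; auto|];
              exfalso; apply Nm; exists x; auto)
        ltac:(intros u pu; destruct u; fin_tac)
        ltac:(intros u v pu pv; destruct u, v; fin_tac)
        ltac:(intros u v pu pv; destruct u, v; fin_tac)
        ltac:(intros u pu; destruct u; fin_tac)
        eq_refl eq_refl) hb100).
Qed.
End AtomREL.


Lemma in_remove_mid {A} (x a : A) l1 l2 : In x (l1 ++ a :: l2) -> x <> a -> In x (l1 ++ l2).
Proof. rewrite !in_app_iff. simpl. intuition congruence. Qed.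

Section Decomp.
Variable M : dmOps.
Hypothesis HM : is_deMorgan M.
Hypothesis HQ : Qp M.
Notation S := (skeleton M).
Notation le := (le M).


Lemma decomp n : forall e, S e -> (exists l, length l <= n /\ forall x, le x e -> In x l) ->
  exists i j k, REL M e (Palg i j k).
Proof.
  induction n as [|n IH]; intros e He [l [Hlen Hcov]].
  - destruct l; [|simpl in Hlen; lia]. destruct (Hcov dbot (le_bot M HM e)).
  - destruct (classic (forall b, S b -> le b e -> b = dbot \/ b = e)) as [Hat|Hn].
    + destruct (classic (e = dbot)) as [->|Hne].
      * exists 0, 0, 0. apply REL_zero; auto.
      * apply (atom_REL M HM HQ e He Hat Hne).
    + apply not_all_ex_not in Hn. destruct Hn as [b Hb].
      apply imply_to_and in Hb. destruct Hb as [Sb Hb].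
      apply imply_to_and in Hb. destruct Hb as [Lb Hb].
      apply not_or_and in Hb. destruct Hb as [Nb0 Nbe].
      set (e2 := e ⊓ dneg b).
      assert (S2 : S e2) by (apply sk_meet, sk_neg; auto).
      assert (D : le (b ⊓ e2) dbot) by (pose proof (sk_disj M HM b Sb); unfold e2; lle M HM).
      assert (E : b ⊔ e2 = e).
      { unfold e2. transitivity ((b ⊔ e) ⊓ (b ⊔ dneg b)); [lat M HM|].
        unfold skeleton in Sb. rewrite Sb. lat M HM. }
      assert (L2 : le e2 e) by (unfold e2; lle M HM).
      assert (N2 : e2 <> dbot).
      { intro Z. apply Nbe. rewrite <- E, Z. symmetry. apply (j0 M HM). }
      assert (Dz : forall x, le x b -> le x e2 -> x = dbot).
      { intros x H1 H2. apply (le_antisym M HM); [|apply (le_bot M HM)]. lle M HM. }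
      destruct (in_split e2 l (Hcov e2 L2)) as [l1 [l2 El]].
      destruct (in_split b l (Hcov b Lb)) as [l1' [l2' El']].
      destruct (IH b Sb) as [i1 [j1 [k1 R1]]].
      { exists (l1 ++ l2). split.
        - rewrite El in Hlen. rewrite length_app in Hlen. simpl in Hlen. rewrite length_app. lia.
        - intros x Hx. apply (in_remove_mid x e2).
          + rewrite <- El. apply Hcov. apply (le_trans M HM) with b; auto.
          + intro Ex. subst x. apply N2. apply Dz; auto. apply (le_refl M HM). }
      destruct (IH e2 S2) as [i2 [j2 [k2 R2]]].
      { exists (l1' ++ l2'). split.
        - rewrite El' in Hlen. rewrite length_app in Hlen. simpl in Hlen. rewrite length_app. lia.
        - intros x Hx. apply (in_remove_mid x b).
          + rewrite <- El'. apply Hcov. apply (le_trans M HM) with e2; auto.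
          + intro Ex. subst x. apply Nb0. apply Dz; auto. apply (le_refl M HM). }
      exists (i1 + i2), (j1 + j2), (k1 + k2).
      rewrite <- E. eapply (REL_transfer M _ _ _ _ (REL_comb M HM b e2 _ _ Sb S2 D R1 R2)).
      apply hb_sum.
Qed.

End Decomp.

Lemma iso_hb A B : isomorphic A B -> exists f, hom_bij A B f.
Proof.
  intros [f [g [H1 [H2 [H3 [H4 [H5 [H6 H7]]]]]]]]. exists f.
  split; [|split; [|repeat split]]; auto.
  - intros x x' E. rewrite <- (H1 x), <- (H1 x'), E. reflexivity.
  - intro y. exists (g y). auto.
Qed.

Theorem mainTheorem3 (M : dmOps) (HM : is_deMorgan M) (Hfin : finite_alg M) :
  perfect_extension M (skeleton M) <->
  exists i j k : nat,
    isomorphic M (prod_alg (pow_alg M1_01 i) (prod_alg (pow_alg M1_0a1 j) (pow_alg M1 k))).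
Proof.
  split.
  - intro HP. assert (HQ : Qp M) by (apply perfect_Q; auto).
    destruct Hfin as [l Hl].
    destruct (decomp M HM HQ (length l) dtop (sk_top M HM)) as [i [j [k R]]].
    { exists l. split; auto. }
    exists i, j, k. apply REL_iso; auto.
  - intros [i [j [k Hiso]]]. apply Q_perfect; auto.
    destruct (iso_hb _ _ Hiso) as [f Hf].
    apply (Q_transfer _ _ _ Hf). apply (Q_P i j k).
Qed.
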